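(* Let $n\ge 2$ and let $\mathcal{A}=\langle Q,\Sigma,\delta\rangle$ be an $n$-state DFA that has a letter of rank $n-1$ and such that the group $P$ generated by the permutation letters of $\Sigma$ acts $2$-transitively on $Q$. Then $\mathcal{A}$ is synchronizing and its reset threshold is at most $2n^2-6n+5$.
   Context: Words act on states letter by letter from left to right. A letter $x$ has rank $n-1$ if $|Q\cdot x|=n-1$; a permutation letter is one acting bijectively on $Q$. A permutation group $P$ on $Q$ is 2-transitive if it acts transitively on ordered pairs of distinct elements of $Q$. The reset threshold is the minimum length of a word $w$ with $|Q\cdot w|=1$. *)

(* Defs.v *)
From mathcomp Require Import all_boot all_fingroup.
Set Implicit Arguments. Unset Strict Implicit. Unset Printing Implicit Defensive.

Definition act_word (Q S : finType) (delta : Q -> S -> Q) (q : Q) (w : seq S) : Q :=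
  foldl delta q w.

Definition image_word (Q S : finType) (delta : Q -> S -> Q) (w : seq S) : {set Q} :=
  [set act_word delta q w | q in Q].

Definition letter_rank (Q S : finType) (delta : Q -> S -> Q) (a : S) : nat :=
  #|[set delta q a | q in Q]|.

Definition perm_letters (Q S : finType) (delta : Q -> S -> Q) : {set {perm Q}} :=
  [set p : {perm Q} | [exists a : S, [forall q : Q, p q == delta q a]]].

Definition perm_group (Q S : finType) (delta : Q -> S -> Q) : {set {perm Q}} :=
  (<<perm_letters delta>>)%g.

Definition two_transitive (Q : finType) (P : {set {perm Q}}) : Prop :=
  forall x y x' y' : Q, x != y -> x' != y' ->
    exists2 g, g \in P & g x = x' /\ g y = y'.

Definition synchronizing (Q S : finType) (delta : Q -> S -> Q) : Prop :=
  exists w : seq S, #|image_word delta w| = 1.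

(* Main.v *)
Require Import Defs.
From mathcomp Require Import all_boot all_fingroup.
From mathcomp Require Import zify.
From Stdlib Require Import Classical.
Set Implicit Arguments. Unset Strict Implicit. Unset Printing Implicit Defensive.

Definition pl (Q S : finType) (delta : Q -> S -> Q) (s : S) : bool :=
  injectiveb (fun q : Q => delta q s).

Definition Lr (Q S : finType) (delta : Q -> S -> Q) (X : {set Q}) :=
  fix L (k : nat) (y z : Q) {struct k} : bool :=
  match k with
  | 0 => (y \in X) ==> (z \in X)
  | k'.+1 => L k' y z && [forall s, pl delta s ==> L k' (delta y s) (delta z s)]
  end.

Definition Er (Q S : finType) (delta : Q -> S -> Q) (X : {set Q}) k (y z : Q) :=
  Lr delta X k y z && Lr delta X k z y.

Lemma act_cons (Q S : finType) (delta : Q -> S -> Q) q s w :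
  act_word delta q (s :: w) = act_word delta (delta q s) w.
Proof. by []. Qed.

Lemma act_cat (Q S : finType) (delta : Q -> S -> Q) q w1 w2 :
  act_word delta q (w1 ++ w2) = act_word delta (act_word delta q w1) w2.
Proof. by rewrite /act_word foldl_cat. Qed.

Lemma act_inj (Q S : finType) (delta : Q -> S -> Q) u :
  all (pl delta) u -> injective (fun q => act_word delta q u).
Proof.
elim: u => [|s u IH] /=; first by move=> _ x y.
case/andP=> /injectiveP Hs /IH Hu x y /= E.
by apply: Hs; apply: Hu.
Qed.

Lemma Lr_refl (Q S : finType) (delta : Q -> S -> Q) (X : {set Q}) k x : Lr delta X k x x.
Proof.
elim: k x => [|k IH] x /=; first by rewrite implybb.
rewrite IH /=; apply/forallP => s; apply/implyP => _; exact: IH.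
Qed.

Lemma Lr_trans (Q S : finType) (delta : Q -> S -> Q) (X : {set Q}) k x y z :
  Lr delta X k x y -> Lr delta X k y z -> Lr delta X k x z.
Proof.
elim: k x y z => [|k IH] x y z /=.
  by move=> /implyP H1 /implyP H2; apply/implyP => /H1 /H2.
case/andP=> H1 /forallP F1 /andP [H2 /forallP F2].
rewrite (IH _ _ _ H1 H2) /=; apply/forallP => s; apply/implyP => ps.
apply: (IH _ (delta y s)); [exact: (implyP (F1 s)) | exact: (implyP (F2 s))].
Qed.

Lemma Lr_down (Q S : finType) (delta : Q -> S -> Q) (X : {set Q}) k x y :
  Lr delta X k.+1 x y -> Lr delta X k x y.
Proof. by case/andP. Qed.

Lemma Lr_0 (Q S : finType) (delta : Q -> S -> Q) (X : {set Q}) k x y :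
  Lr delta X k x y -> Lr delta X 0 x y.
Proof. by elim: k => [//|k IH] /Lr_down. Qed.

Lemma Lr_words (Q S : finType) (delta : Q -> S -> Q) (X : {set Q}) k y z :
  (forall v, all (pl delta) v -> size v <= k ->
     act_word delta y v \in X -> act_word delta z v \in X) ->
  Lr delta X k y z.
Proof.
elim: k y z => [|k IH] y z H /=.
  by apply/implyP; apply: (H [::]).
rewrite IH /=; last by move=> v av sv; apply: H => //; apply: leqW.
apply/forallP => s; apply/implyP => ps; apply: IH => v av sv.
by apply: (H (s :: v)); rewrite /= ?ps.
Qed.

Lemma pg_ind (Q S : finType) (delta : Q -> S -> Q) (ok : pred {perm Q}) :
  ok 1%g -> (forall g h, ok g -> ok h -> ok (g * h)%g) ->
  (forall s (g : {perm Q}), pl delta s -> (forall q, g q = delta q s) -> ok g) ->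
  forall g, g \in perm_group delta -> ok g.
Proof.
move=> o1 oM oL.
have gs : group_set [set g | ok g].
  apply/group_setP; split; first by rewrite inE.
  by move=> x y; rewrite !inE; apply: oM.
have sub : perm_letters delta \subset Group gs.
  apply/subsetP => g; rewrite inE => /existsP [s /forallP Hs].
  have Hg : forall q, g q = delta q s by move=> q; apply/eqP/Hs.
  rewrite inE (oL s g) //.
  by apply/injectiveP => x y; rewrite -!Hg; apply: perm_inj.
have := gen_subG (perm_letters delta) (Group gs); rewrite sub => /subsetP H g.
by rewrite /perm_group => /H; rewrite inE.
Qed.

Lemma card_refine (T U : finType) (f g : T -> U) :
  (forall x y, f x = f y -> g x = g y) -> forall x y, g x = g y -> f x != f y ->
  #|[set g z | z in [set: T]]| < #|[set f z | z in [set: T]]|.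
Proof.
move=> Hfg x y gxy fxy.
pose h (t : U) := if [pick z | f z == t] is Some z then g z else g x.
have hf : forall z, h (f z) = g z.
  move=> z; rewrite /h; case: pickP => [z' /eqP /Hfg -> //|/(_ z)]; by rewrite eqxx.
have -> : [set g z | z in [set: T]] = [set h t | t in [set f z | z in [set: T]]].
  by rewrite -imset_comp; apply: eq_imset => z /=; rewrite hf.
rewrite ltn_neqAle leq_imset_card andbT; apply/negP => /imset_injP Hinj.
move/negP: fxy; apply; apply/eqP; apply: Hinj; rewrite ?imset_f ?inE //; by rewrite !hf.
Qed.

Lemma Er_trans (Q S : finType) (delta : Q -> S -> Q) (X : {set Q}) k x y z :
  Er delta X k x y -> Er delta X k y z -> Er delta X k x z.
Proof.
case/andP=> H1 H2 /andP [H3 H4]; rewrite /Er.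
by rewrite (Lr_trans H1 H3) (Lr_trans H4 H2).
Qed.

Lemma Er_sym (Q S : finType) (delta : Q -> S -> Q) (X : {set Q}) k x y :
  Er delta X k x y = Er delta X k y x.
Proof. by rewrite /Er andbC. Qed.

Lemma Er_refl (Q S : finType) (delta : Q -> S -> Q) (X : {set Q}) k x :
  Er delta X k x x.
Proof. by rewrite /Er Lr_refl. Qed.

Lemma Er_down (Q S : finType) (delta : Q -> S -> Q) (X : {set Q}) k x y :
  Er delta X k.+1 x y -> Er delta X k x y.
Proof. by case/andP => /Lr_down H1 /Lr_down H2; rewrite /Er H1 H2. Qed.

Lemma moore (Q S : finType) (delta : Q -> S -> Q) (X : {set Q}) n y0 z0 :
  #|Q| = n -> 2 <= n -> y0 \in X -> z0 \notin X ->
  two_transitive (perm_group delta) ->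
  forall x y, Er delta X (n - 2) x y -> x = y.
Proof.
move=> cQ n2 y0X z0X H2.
have yz : y0 != z0 by apply/eqP => e; move: z0X; rewrite -e y0X.
have stable_eq : forall k, (forall x y, Er delta X k.+1 x y = Er delta X k x y) ->
    forall x y, Er delta X k x y -> x = y.
  move=> k Hst x y Exy; apply/eqP/negPn/negP => nxy.
  have inv : forall g, g \in perm_group delta ->
      [forall x, forall y, Er delta X k x y ==> Er delta X k (g x) (g y)].
    apply: pg_ind.
    - by apply/forallP => x'; apply/forallP => y'; rewrite !perm1 implybb.
    - move=> g h /forallP Hg /forallP Hh; apply/forallP => x'; apply/forallP => y'.
      rewrite !permM; apply/implyP => E1.
      have E2 := implyP (forallP (Hg x') y') E1.
      exact: (implyP (forallP (Hh (g x')) (g y')) E2).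
    - move=> s g ps Hg; apply/forallP => x'; apply/forallP => y'; rewrite !Hg.
      apply/implyP; rewrite -Hst => /andP [/andP [_ /forallP F1] /andP [_ /forallP F2]].
      by apply/andP; split; [exact: (implyP (F1 s) ps) | exact: (implyP (F2 s) ps)].
  have [g gP [gx gy]] := H2 x y y0 z0 nxy yz.
  have := implyP (forallP (forallP (inv g gP) x) y) Exy; rewrite gx gy.
  by case/andP => /Lr_0 /= /implyP /(_ y0X); rewrite (negbTE z0X).
pose cls k x := [set y | Er delta X k x y].
have clsE : forall k x y, Er delta X k x y -> cls k x = cls k y.
  move=> k x y Exy; apply/setP => z; rewrite !inE; apply/idP/idP => H.
    by apply: Er_trans H; rewrite Er_sym.
  exact: Er_trans H.
have claim : forall k, (forall x y, Er delta X k x y -> x = y) \/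
    k.+2 <= #|[set cls k x | x in [set: Q]]|.
  elim=> [|k IH].
    right.
    have -> : 2 = #|[set cls 0 y0; cls 0 z0]|.
      rewrite cards2; case: eqP => // e.
      have : z0 \in cls 0 y0 by rewrite e inE Er_refl.
      by rewrite inE /Er /= y0X (negbTE z0X).
    apply: subset_leq_card; apply/subsetP => C; rewrite !inE => /orP [] /eqP ->;
      by rewrite imset_f ?inE.
  case: IH => [IH|IH]; first by left => x y /Er_down /IH.
  case: (boolP [forall x, forall y, Er delta X k.+1 x y == Er delta X k x y]) => [st|nst].
    left => x y /Er_down; apply: stable_eq => x' y'; exact/eqP/(forallP (forallP st x')).
  right; move: nst => /forallPn [x /forallPn [y /negP nE]].
  have Ek : Er delta X k x y.
    move: nE; case E1 : (Er delta X k.+1 x y) => nE'; first exact: Er_down E1.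
    by case: (Er delta X k x y) nE' => // /(_ erefl).
  have nEk1 : ~~ Er delta X k.+1 x y by apply/negP => E1; apply: nE; rewrite E1 Ek.
  apply: (leq_ltn_trans IH); apply: (@card_refine _ _ (cls k.+1) (cls k) _ x y).
  - move=> x' y' e; apply: clsE; apply: Er_down.
    have : y' \in cls k.+1 y' by rewrite inE Er_refl.
    by rewrite -e inE.
  - exact: clsE.
  - apply/eqP => e; move: nEk1; have : y \in cls k.+1 y by rewrite inE Er_refl.
    by rewrite -e inE => ->.
move=> x y Exy; case: (claim (n - 2)) => [/(_ x y Exy) //|].
have -> : (n - 2).+2 = #|[set: Q]| by rewrite cardsT cQ; lia.
move=> H; have : #|[set cls (n - 2) x | x in [set: Q]]| == #|[set: Q]|.
  by rewrite eqn_leq H leq_imset_card.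
move/imset_injP => Hinj; apply: Hinj; rewrite ?inE //; exact: clsE.
Qed.

Definition Ball (Q S : finType) (delta : Q -> S -> Q) (x0 : Q) :=
  fix B (k : nat) : {set Q} :=
  match k with
  | 0 => [set x0]
  | k'.+1 => B k' :|: [set y | [exists q, [exists s, [&& q \in B k', pl delta s & delta q s == y]]]]
  end.

Lemma ball_words (Q S : finType) (delta : Q -> S -> Q) x0 k y :
  y \in Ball delta x0 k ->
  exists w, [/\ all (pl delta) w, size w <= k & act_word delta x0 w = y].
Proof.
elim: k y => [|k IH] y /=.
  by rewrite inE => /eqP ->; exists [::].
rewrite !inE => /orP [/IH [w [aw sw ew]]|].
  by exists w; split => //; apply: leqW.
case/existsP => q /existsP [s /and3P [qB ps /eqP e]].
have [w [aw sw ew]] := IH q qB.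
exists (w ++ [:: s]); split.
- by rewrite all_cat aw /= ps.
- by rewrite size_cat addn1.
- by rewrite act_cat ew.
Qed.

Lemma ball_grow (Q S : finType) (delta : Q -> S -> Q) x0 :
  (forall y, exists2 g, g \in perm_group delta & g x0 = y) ->
  forall k, Ball delta x0 k = setT \/ k.+1 <= #|Ball delta x0 k|.
Proof.
move=> Htr; elim=> [|k IH]; first by right; rewrite /= cards1.
have sub : Ball delta x0 k \subset Ball delta x0 k.+1 by rewrite /= subsetUl.
case: IH => [IH|IH].
  left; apply/eqP; rewrite eqEsubset subsetT /=; by rewrite -IH.
case: (ltnP #|Ball delta x0 k| #|Ball delta x0 k.+1|) => [lt|ge].
  by right; apply: leq_trans lt.
have eqB : Ball delta x0 k.+1 = Ball delta x0 k.
  by apply/eqP; rewrite eq_sym eqEcard sub ge.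
left.
have inv : forall g, g \in perm_group delta ->
   [forall q, (q \in Ball delta x0 k) ==> (g q \in Ball delta x0 k)].
  apply: pg_ind.
  - by apply/forallP => q; rewrite perm1 implybb.
  - move=> g h /forallP Hg /forallP Hh; apply/forallP => q; rewrite permM.
    by apply/implyP => /(implyP (Hg q)) /(implyP (Hh (g q))).
  - move=> s g ps Hg; apply/forallP => q; rewrite Hg; apply/implyP => qB.
    rewrite -eqB /= !inE; apply/orP; right.
    by apply/existsP; exists q; apply/existsP; exists s; rewrite qB ps eqxx.
rewrite eqB; apply/eqP; rewrite eqEsubset subsetT /=; apply/subsetP => y _.
have [g gP <-] := Htr y.
have x0B : x0 \in Ball delta x0 k.
  by elim: (k) => [|j IHj] /=; rewrite ?inE ?eqxx ?IHj.
exact: (implyP (forallP (inv g gP) x0) x0B).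
Qed.

Lemma trans_of_2 (Q S : finType) (delta : Q -> S -> Q) x0 :
  two_transitive (perm_group delta) ->
  forall y, exists2 g, g \in perm_group delta & g x0 = y.
Proof.
move=> H2 y; case: (eqVneq y x0) => [->|ne].
  by exists 1%g; [exact: group1 | rewrite perm1].
have ne2 : x0 != y by rewrite eq_sym.
have [g gP [gx _]] := H2 x0 y y x0 ne2 ne.
by exists g.
Qed.

Lemma reach (Q S : finType) (delta : Q -> S -> Q) n x0 :
  #|Q| = n -> 2 <= n -> two_transitive (perm_group delta) ->
  forall y, exists w, [/\ all (pl delta) w, size w <= n - 1 & act_word delta x0 w = y].
Proof.
move=> cQ n2 H2 y; apply: ball_words.
have : Ball delta x0 (n - 1) = setT.
  case: (ball_grow (trans_of_2 x0 H2) (n - 1)) => //.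
  have -> : (n - 1).+1 = n by lia.
  move=> H; apply/eqP; rewrite eqEcard subsetT /=.
  by rewrite cardsT cQ.
by move=> ->; rewrite inE.
Qed.

Lemma key (Q S : finType) (delta : Q -> S -> Q) (X : {set Q}) n x0 r y0 z0 :
  #|Q| = n -> 2 <= n -> x0 != r -> two_transitive (perm_group delta) ->
  y0 \in X -> z0 \notin X ->
  exists u, [/\ all (pl delta) u, size u <= 2 * n - 3,
     act_word delta x0 u \in X & act_word delta r u \notin X].
Proof.
move=> cQ n2 xr H2 y0X z0X.
case: (classic (exists u, [/\ all (pl delta) u, size u <= 2 * n - 3,
     act_word delta x0 u \in X & act_word delta r u \notin X])) => // Hn.
exfalso.
have H : forall u, all (pl delta) u -> size u <= 2 * n - 3 ->
    act_word delta x0 u \in X -> act_word delta r u \in X.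
  move=> u au su xu; case E : (act_word delta r u \in X) => //.
  by exfalso; apply: Hn; exists u; rewrite E.
have nxt : forall y, exists2 z, z != y & Lr delta X (n - 2) y z.
  move=> y; have [w [aw sw ew]] := reach x0 cQ n2 H2 y.
  exists (act_word delta r w).
    rewrite -ew; apply/negP => /eqP /(act_inj aw) e.
    by rewrite e eqxx in xr.
  apply: Lr_words => v av sv; rewrite -ew -!act_cat; apply: H.
  - by rewrite all_cat aw av.
  - rewrite size_cat; lia.
pose up y := [set z | Lr delta X (n - 2) y z].
have [y1 _ Hmin] := @arg_minnP Q x0 predT (fun y => #|up y|) isT.
have [z zy Lyz] := nxt y1.
have sub : up z \subset up y1.
  by apply/subsetP => t; rewrite !inE; apply: Lr_trans.
have equp : up z = up y1.
  by apply/eqP; rewrite eqEcard sub; apply: Hmin.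
have : y1 \in up z by rewrite equp inE Lr_refl.
rewrite inE => Lzy.
have := @moore Q S delta X n y0 z0 cQ n2 y0X z0X H2 y1 z.
by rewrite /Er Lyz Lzy => /(_ isT) e; rewrite e eqxx in zy.
Qed.

Theorem mainTheorem8 (n : nat) (Q S : finType) (delta : Q -> S -> Q) :
  2 <= n -> #|Q| = n ->
  (exists a : S, letter_rank delta a = n.-1) ->
  two_transitive (perm_group delta) ->
  synchronizing delta /\
  (exists w : seq S, #|image_word delta w| = 1 /\ size w <= 2 * n ^ 2 + 5 - 6 * n).
Proof.
move=> n2 cQ [a ra] H2.
rewrite /letter_rank in ra.
set I := [set delta q a | q in Q] in ra.
have [r _ rI] : exists2 r, r \in [set: Q] & r \notin I.
  apply/subsetPn; apply/negP => sub; have := subset_leq_card sub.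
  rewrite cardsT cQ ra; lia.
have inI : forall y, y != r -> y \in I.
  have eI : I = [set~ r].
    apply/eqP; rewrite eqEcard cardsC1 cQ ra leqnn andbT.
    apply/subsetP => y yI; rewrite !inE; apply/eqP => e; by move: rI; rewrite -e yI.
  by move=> y yr; rewrite eI !inE.
have [p [p' pp' epp]] : exists p, exists2 p', p != p' & delta p a = delta p' a.
  apply/injectivePn; apply/negP => /injectiveP inj.
  have := card_imset (mem Q) inj; rewrite -/I ra cQ; lia.
set x0 := delta p a.
have x0r : x0 != r by apply/eqP => e; move: rI; rewrite -e /x0 imset_f.
have claim : forall j, j <= n - 2 -> exists Y : {set Q}, exists w, exists s,
    [/\ j.+2 <= #|Y|, size w <= 1 + j * (2 * n - 2) &
        forall q, q \in Y -> act_word delta q w = s].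
  elim=> [|j IH] jn.
    exists [set p; p'], [:: a], x0; split.
    - by rewrite cards2 pp'.
    - by [].
    - by move=> q; rewrite !inE => /orP [] /eqP ->.
  have [Y [w [s [cY sw Yw]]]] := IH (ltnW jn).
  case: (ltnP j.+2 #|Y|) => [lt|ge].
    exists Y, w, s; split => //; rewrite mulSn; lia.
  have cYe : #|Y| = j.+2 by apply/eqP; rewrite eqn_leq ge cY.
  have [y0 y0Y] : exists y0, y0 \in Y.
    by apply/card_gt0P; rewrite cYe.
  have [z0 _ z0Y] : exists2 z0, z0 \in [set: Q] & z0 \notin Y.
    apply/subsetPn; apply/negP => sub; have := subset_leq_card sub.
    rewrite cardsT cQ cYe; lia.
  have [u [au su xu ru]] := key cQ n2 x0r H2 y0Y z0Y.
  pose Y2 := (fun q => act_word delta q u) @^-1: Y.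
  pose Y1 := (fun q => delta q a) @^-1: Y2.
  have cY2 : #|Y2| = #|Y| by rewrite card_preimset //; exact: act_inj.
  have imY1 : [set delta q a | q in Y1] = Y2.
    apply/eqP; rewrite eqEsubset; apply/andP; split.
      by apply/subsetP => y /imsetP [q qY1 ->]; rewrite inE in qY1.
    apply/subsetP => y yY2.
    have yr : y != r by apply/eqP => e; move: yY2; rewrite e inE (negbTE ru).
    have /imsetP [q _ yq] := inI y yr.
    by apply/imsetP; exists q => //; rewrite inE -yq.
  have pY1 : p \in Y1 by rewrite !inE.
  have p'Y1 : p' \in Y1 by rewrite !inE -epp.
  have lt1 : #|Y2| < #|Y1|.
    rewrite -imY1 ltn_neqAle leq_imset_card andbT.
    apply/negP => /imset_injP inj; have := inj p p' pY1 p'Y1 epp.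
    by move/eqP; rewrite (negbTE pp').
  exists Y1, (a :: u ++ w), s; split.
  - by apply: leq_trans lt1; rewrite cY2 cYe.
  - rewrite /= size_cat mulSn; lia.
  - move=> q; rewrite !inE => qY; rewrite act_cons act_cat; exact: Yw.
have [Y [w [s [cY sw Yw]]]] := claim (n - 2) (leqnn _).
have YT : Y = setT.
  apply/eqP; rewrite eqEcard subsetT cardsT cQ /=; move: cY; have -> : (n-2).+2 = n by lia.
  by [].
have img : image_word delta w = [set s].
  apply/eqP; rewrite eqEsubset; apply/andP; split.
    by apply/subsetP => t /imsetP [q _ ->]; rewrite inE Yw // YT inE.
  apply/subsetP => t; rewrite inE => /eqP ->.
  by apply/imsetP; exists p => //; rewrite Yw // YT inE.
have c1 : #|image_word delta w| = 1 by rewrite img cards1.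
split; first by exists w.
exists w; split => //.
apply: (leq_trans sw); nia.
Qed.
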